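(* Let $G$ be a finite connected vertex-transitive $(q+1)$-regular graph and $x_0\in V(G)$. Then, as formal power series in $t$, \[ \zeta_a(G,t)=\zeta(G,t)\,\zeta(G,-t). \]
   Context: Let $D_G$ be the symmetric digraph of $G$ (arcs $(u,v),(v,u)$ for each edge $uv$; $o(u,v)=u$, $t(u,v)=v$, $(u,v)^{-1}=(v,u)$). Generalized Ihara zeta function: $\zeta(G,t)=\exp\big(\sum_{k\ge1}\frac{N^0_k}{k}t^k\big)$, where $N^0_k$ is the number of reduced cycles of length $k$ starting at $x_0$; a cycle of length $k$ is an arc sequence $(e_1,\dots,e_k)$ with $t(e_i)=o(e_{i+1})$, $t(e_k)=o(e_1)$, starting at $x_0=o(e_1)$; reduced means neither it nor $(e_1,\dots,e_k,e_1,\dots,e_k)$ contains consecutive arcs $e,e^{-1}$. Generalized alternating zeta function: $\zeta_a(G,t)=\exp\big(\sum_{k\ge1}\frac{N^{0,a}_k}{k}t^k\big)$, where $N^{0,a}_k$ is the number of reduced $x_0$-alternating cycles of length $k$ in $D_G$. Here an alternating walk of length $r$ is an arc sequence $[e_1,\dots,e_r]$ with vertices $v_0,\dots,v_r$ such that either $e_i=(v_{i-1},v_i)$ for odd $i$ and $e_i=(v_i,v_{i-1})$ for even $i$, or $e_i=(v_i,v_{i-1})$ for odd $i$ and $e_i=(v_{i-1},v_i)$ for even $i$; an $x_0$-alternating cycle is one of even length with $v_0=v_r=x_0$; it is reduced if $e_{i+1}\ne e_i$ for all $i\le r-1$ and $e_r\ne e_1$. By vertex-transitivity these functions do not depend on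 $x_0$. *)

(* Defs.v *)
From mathcomp Require Import all_boot all_order all_algebra.
Set Implicit Arguments. Unset Strict Implicit. Unset Printing Implicit Defensive.
Import Order.TTheory GRing.Theory Num.Theory.
Local Open Scope ring_scope.

Definition fps := nat -> rat.

Definition fps_one : fps := fun n => (n == 0%N)%:R.

Definition fps_mul (f g : fps) : fps :=
  fun n => \sum_(i < n.+1) f i * g (n - i)%N.

Fixpoint fps_pow (f : fps) (m : nat) : fps :=
  match m with 0%N => fps_one | m'.+1 => fps_mul f (fps_pow f m') end.

(** exp f = \sum_m f^m / m!  ; for f with zero constant term, f^m has
    valuation >= m, so the n-th coefficient only involves m <= n. *)
Definition fps_exp (f : fps) : fps :=
  fun n => \sum_(m < n.+1) fps_pow f m n / (m`!)%:R.

Definition fps_negt (f : fps) : fps := fun n => (-1) ^+ n * f n.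

Definition logser (N : nat -> nat) : fps :=
  fun k => if k == 0%N then 0 else (N k)%:R / k%:R.

Section Graph.
Variables (T : finType) (e : rel T).

(** arcs of the symmetric digraph D_G are pairs (u,v) with u ~ v;
    o(u,v) = u = a.1, t(u,v) = v = a.2 *)
Definition is_arc (a : T * T) : bool := e a.1 a.2.
Definition arc_inv (a : T * T) : T * T := (a.2, a.1).

Definition connected_graph : Prop := forall x y : T, connect e x y.

Definition vertex_transitive : Prop :=
  forall x y : T, exists f : T -> T,
    [/\ bijective f, (forall u v, e (f u) (f v) = e u v) & f x = y].

Definition regular (d : nat) : Prop := forall x : T, #|[set y | e x y]| = d.

Fixpoint no_backtrack (s : seq (T * T)) : bool :=
  match s with
  | a :: ((b :: _) as s') => (b != arc_inv a) && no_backtrack s'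
  | _ => true
  end.

Definition is_cycle_at (x0 : T) (s : seq (T * T)) : bool :=
  [&& all is_arc s, 0 < size s,
      [forall i : 'I_(size s),
         (nth (x0, x0) s i).2 == (nth (x0, x0) s ((i.+1) %% size s)).1]
    & (nth (x0, x0) s 0).1 == x0]%N.

Definition reduced_cycle (s : seq (T * T)) : bool :=
  no_backtrack s && no_backtrack (s ++ s).

Definition N0 (x0 : T) (k : nat) : nat :=
  #|[set c : k.-tuple (T * T) | is_cycle_at x0 c && reduced_cycle c]|.

(** ** Alternating cycles.
   0-based: arc e_(i+1) = nth s i, vertex v_i = nth vs i.
   pattern b = false: paper-odd i (0-based even) e = (v_{i-1},v_i);
   pattern b = true : the other alternative. *)
Definition alt_pattern (b : bool) (x0 : T) (s : seq (T * T)) (vs : seq T) : bool :=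
  [forall i : 'I_(size s),
     nth (x0, x0) s i ==
       (if odd i != b then (nth x0 vs i.+1, nth x0 vs i)
        else (nth x0 vs i, nth x0 vs i.+1))].

Definition is_alt_cycle_at (x0 : T) (k : nat) (c : k.-tuple (T * T)) : bool :=
  [&& all is_arc c, ~~ odd k &
      [exists vs : k.+1.-tuple T,
         [&& nth x0 vs 0 == x0, nth x0 vs k == x0 &
             alt_pattern false x0 c vs || alt_pattern true x0 c vs]]].

Fixpoint no_repeat (s : seq (T * T)) : bool :=
  match s with
  | a :: ((b :: _) as s') => (b != a) && no_repeat s'
  | _ => true
  end.

Definition reduced_alt (x0 : T) (s : seq (T * T)) : bool :=
  no_repeat s && (nth (x0, x0) s (size s).-1 != nth (x0, x0) s 0).

Definition Na (x0 : T) (k : nat) : nat :=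
  #|[set c : k.-tuple (T * T) | is_alt_cycle_at x0 c && reduced_alt x0 c]|.

Definition ihara_zeta (x0 : T) : fps := fps_exp (logser (N0 x0)).
Definition alt_zeta (x0 : T) : fps := fps_exp (logser (Na x0)).

End Graph.

(* Main.v *)
Require Import Defs.
From mathcomp Require Import all_boot all_order all_algebra.
From mathcomp Require Import zify ring.
From Stdlib Require Import FunctionalExtensionality.
Set Implicit Arguments. Unset Strict Implicit. Unset Printing Implicit Defensive.
Import Order.TTheory GRing.Theory Num.Theory.

Lemma inv_invK (T : finType) : involutive (@arc_inv T).
Proof. by case. Qed.

Lemma nbP (T : finType) (d : T * T) (s : seq (T * T)) :
  no_backtrack s <->
  (forall i, i.+1 < size s -> nth d s i.+1 != arc_inv (nth d s i)).
Proof.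
elim: s => [|a s IH] /=; first by split.
case: s IH => [|b s] IH /=; first by split => // _ [|i].
split.
  by move=> /andP[h1 /IH h2] [|i] hi /=; [exact h1 | exact: h2].
move=> h; apply/andP; split; first exact: (h 0).
by apply/IH => i hi; exact: (h i.+1).
Qed.

Lemma nrP (T : finType) (d : T * T) (s : seq (T * T)) :
  no_repeat s <->
  (forall i, i.+1 < size s -> nth d s i.+1 != nth d s i).
Proof.
elim: s => [|a s IH] /=; first by split.
case: s IH => [|b s] IH /=; first by split => // _ [|i].
split.
  by move=> /andP[h1 /IH h2] [|i] hi /=; [exact h1 | exact: h2].
move=> h; apply/andP; split; first exact: (h 0).
by apply/IH => i hi; exact: (h i.+1).
Qed.

Definition chain (T : finType) (x0 : T) (s : seq (T * T)) : Prop :=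
  forall i, i.+1 < size s -> (nth (x0, x0) s i).2 = (nth (x0, x0) s i.+1).1.

Definition CP (T : finType) (e : rel T) (x0 : T) (s : seq (T * T)) : Prop :=
  [/\ all (is_arc e) s, chain x0 s, (nth (x0, x0) s 0).1 = x0,
      (nth (x0, x0) s (size s).-1).2 = x0 &
      (forall i, i.+1 < size s -> nth (x0, x0) s i.+1 != arc_inv (nth (x0, x0) s i))
      /\ nth (x0, x0) s 0 != arc_inv (nth (x0, x0) s (size s).-1)].

Lemma cycP (T : finType) (e : rel T) (x0 : T) (s : seq (T * T)) :
  0 < size s -> (is_cycle_at e x0 s && reduced_cycle s) <-> CP e x0 s.
Proof.
move=> s0; rewrite /is_cycle_at /reduced_cycle; split.
  move=> /andP[/and4P[ha _ /forallP hc /eqP h0] /andP[/(nbP (x0,x0)) hnb /(nbP (x0,x0)) hnb2]].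
  split => //.
  - move=> i hi; have := hc (Ordinal (ltnW hi)); rewrite /= modn_small //; by move/eqP.
  - have hl : (size s).-1 < size s by lia.
    have := hc (Ordinal hl); rewrite /= prednK // modnn => /eqP ->; exact h0.
  - split => //.
    have hl : ((size s).-1).+1 < size (s ++ s) by rewrite size_cat; lia.
    by have := hnb2 _ hl; rewrite !nth_cat prednK // ltnn subnn leqnn.
move=> [ha hch h0 hend [hnb hw]].
apply/andP; split.
  apply/and4P; split => //; last by apply/eqP.
  apply/forallP => i; case: (ltnP i.+1 (size s)) => hi.
    by rewrite modn_small //; apply/eqP; exact: hch.
  have hi' : i = (size s).-1 :> nat by have := ltn_ord i; lia.
  rewrite (_ : i.+1 = size s); last by lia.
  by rewrite modnn hi' hend h0.
apply/andP; split; apply/(nbP (x0, x0)) => //.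
move=> i; rewrite size_cat => hi; rewrite !nth_cat.
case: (ltnP i.+1 (size s)) => h1.
  by rewrite (ltnW h1); exact: hnb.
case: (ltnP i (size s)) => h2.
  rewrite (_ : (i.+1 - size s) = 0); last by lia.
  by rewrite (_ : i = (size s).-1) //; lia.
rewrite (_ : (i.+1 - size s) = (i - size s).+1); last by lia.
apply: hnb; lia.
Qed.

Definition psi (T : finType) (x0 : T) (b : bool) (s : seq (T * T)) : seq (T * T) :=
  mkseq (fun i => if odd i != b then arc_inv (nth (x0, x0) s i) else nth (x0, x0) s i)
        (size s).

Lemma size_psi (T : finType) (x0 : T) b s : size (psi x0 b s) = size s.
Proof. by rewrite size_mkseq. Qed.

Lemma nth_psi (T : finType) (x0 : T) b s i : i < size s ->
  nth (x0, x0) (psi x0 b s) i =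
  if odd i != b then arc_inv (nth (x0, x0) s i) else nth (x0, x0) s i.
Proof. by move=> hi; rewrite nth_mkseq. Qed.

Lemma psiK (T : finType) (x0 : T) b s : psi x0 b (psi x0 b s) = s.
Proof.
apply: (@eq_from_nth _ (x0, x0)); rewrite ?size_psi // => i hi.
rewrite nth_psi ?size_psi // nth_psi //; by case: (odd i != b); rewrite ?inv_invK.
Qed.

Lemma pattP (T : finType) (x0 : T) b (s : seq (T * T)) (vs : seq T) :
  alt_pattern b x0 s vs <->
  (forall i, i < size s -> nth (x0, x0) (psi x0 b s) i = (nth x0 vs i, nth x0 vs i.+1)).
Proof.
rewrite /alt_pattern; split.
  move/forallP => h i hi; have := h (Ordinal hi); rewrite /= nth_psi //.
  by move/eqP ->; case: (odd i != b).
move=> h; apply/forallP => i; have := h i (ltn_ord i); rewrite nth_psi //.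
by case: (odd i != b) => hh; apply/eqP; rewrite -?hh // -[LHS]inv_invK hh.
Qed.

Lemma vsP (T : finType) (x0 : T) b k (s : seq (T * T)) : size s = k -> 0 < k ->
  (exists vs : k.+1.-tuple T,
     [&& nth x0 vs 0 == x0, nth x0 vs k == x0 & alt_pattern b x0 s vs]) <->
  [/\ chain x0 (psi x0 b s), (nth (x0, x0) (psi x0 b s) 0).1 = x0 &
      (nth (x0, x0) (psi x0 b s) k.-1).2 = x0].
Proof.
move=> hs k0; split.
  move=> [vs /and3P[/eqP h0 /eqP hk /pattP hp]].
  split.
  - by move=> i; rewrite size_psi => hi; rewrite !hp //; lia.
  - by rewrite hp ?hs.
  - by rewrite hp ?hs; [rewrite prednK | lia].
move=> [hch h0 hk].
pose f i := if i < k then (nth (x0, x0) (psi x0 b s) i).1 else x0.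
have szf : size (mkseq f k.+1) == k.+1 by rewrite size_mkseq.
exists (Tuple szf); apply/and3P; split => /=.
- by rewrite /f k0 h0.
- by rewrite nth_mkseq // /f ltnn.
apply/pattP => i hi; have hj1 : i < k.+1 by lia.
have hj2 : i.+1 < k.+1 by lia.
rewrite (@nth_mkseq _ x0 f k.+1 i hj1) (@nth_mkseq _ x0 f k.+1 i.+1 hj2).
rewrite /f (_ : i < k); last by lia.
case: (ltnP i.+1 k) => hi1.
  by rewrite -hch ?size_psi ?hs //; case: (nth _ _ _).
rewrite (_ : i = k.-1) in hi *; last by lia.
by move: hk; case: (nth (x0, x0) (psi x0 b s) k.-1) => a1 a2 /= ->.
Qed.

Definition AP (T : finType) (e : rel T) (x0 : T) (s : seq (T * T)) : Prop :=
  [/\ all (is_arc e) s, ~~ odd (size s),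
      (exists b, [/\ chain x0 (psi x0 b s), (nth (x0, x0) (psi x0 b s) 0).1 = x0 &
                     (nth (x0, x0) (psi x0 b s) (size s).-1).2 = x0]),
      (forall i, i.+1 < size s -> nth (x0, x0) s i.+1 != nth (x0, x0) s i) &
      nth (x0, x0) s (size s).-1 != nth (x0, x0) s 0].

Lemma altP (T : finType) (e : rel T) (x0 : T) k (c : k.-tuple (T * T)) :
  0 < k -> (is_alt_cycle_at e x0 c && reduced_alt x0 c) <-> AP e x0 c.
Proof.
move=> k0; have hs := size_tuple c.
rewrite /is_alt_cycle_at /reduced_alt /AP; split.
  move=> /andP[/and3P[ha hodd /existsP[vs hvs]] /andP[/(nrP (x0,x0)) hnr hw]].
  split => //; first by rewrite hs.
  move: hvs => /and3P[h0 hk /orP[hp|hp]].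
    by exists false; rewrite hs; apply/(vsP _ _ hs k0); exists vs; rewrite h0 hk hp.
  by exists true; rewrite hs; apply/(vsP _ _ hs k0); exists vs; rewrite h0 hk hp.
move=> [ha hodd [b hb] hnr hw].
apply/andP; split.
  apply/and3P; split => //; first by rewrite -hs.
  rewrite hs in hb.
  have [vs /and3P[h0 hk hp]] := (vsP _ _ hs k0).2 hb.
  by apply/existsP; exists vs; rewrite h0 hk /=; case: b hp {hb} => ->; rewrite ?orbT.
by apply/andP; split => //; apply/(nrP (x0, x0)).
Qed.

Lemma PW1 (T : finType) t t' (x y : T * T) : t' = ~~ t ->
  ((if t' then arc_inv y else y) == arc_inv (if t then arc_inv x else x)) = (y == x).
Proof.
move=> ->; case: t => /=; rewrite ?inv_invK //.
by rewrite (inj_eq (can_inj (@inv_invK T))).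
Qed.

Lemma PW2 (T : finType) t t' (x y : T * T) : t' = ~~ t ->
  ((if t' then arc_inv y else y) == (if t then arc_inv x else x)) = (y == arc_inv x).
Proof.
move=> ->; case: t => //=.
by apply/eqP/eqP => [<-|->]; rewrite inv_invK.
Qed.

Lemma parS i b : (odd i.+1 != b) = ~~ (odd i != b).
Proof. by rewrite /=; case: (odd i); case: b. Qed.

Lemma par_last k b : 0 < k -> ~~ odd k -> (odd k.-1 != b) = ~~ (odd 0 != b).
Proof.
move=> k0 hk; have : odd k.-1.
  by move: hk; rewrite -{1}(prednK k0) /= negbK.
by move=> ->; case: b.
Qed.

Lemma arc_inv_arc (T : finType) (e : rel T) : symmetric e ->
  forall a, is_arc e (arc_inv a) = is_arc e a.
Proof. by move=> hs [a b]; rewrite /is_arc /= hs. Qed.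

Lemma all_psi (T : finType) (e : rel T) (x0 : T) b s : symmetric e ->
  all (is_arc e) s -> all (is_arc e) (psi x0 b s).
Proof.
move=> hsym ha; apply/(all_nthP (x0, x0)) => i; rewrite size_psi => hi.
rewrite nth_psi //; have := (all_nthP (x0, x0) ha) i hi.
by case: ifP => _ //; rewrite arc_inv_arc.
Qed.

Lemma alt_to_cyc (T : finType) (e : rel T) (x0 : T) b s : symmetric e ->
  0 < size s -> ~~ odd (size s) -> all (is_arc e) s ->
  [/\ chain x0 (psi x0 b s), (nth (x0, x0) (psi x0 b s) 0).1 = x0 &
      (nth (x0, x0) (psi x0 b s) (size s).-1).2 = x0] ->
  (forall i, i.+1 < size s -> nth (x0, x0) s i.+1 != nth (x0, x0) s i) ->
  nth (x0, x0) s (size s).-1 != nth (x0, x0) s 0 ->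
  CP e x0 (psi x0 b s).
Proof.
move=> hsym s0 hev ha [hch h0 hk] hnr hw.
split; rewrite ?size_psi //; first exact: all_psi.
split.
  move=> i hi; rewrite !nth_psi //; last by lia.
  by rewrite PW1 ?hnr // parS.
rewrite !nth_psi //; last by lia.
rewrite PW1; first by rewrite eq_sym.
by rewrite (par_last b s0 hev) negbK.
Qed.

Lemma cyc_to_alt (T : finType) (e : rel T) (x0 : T) b c : symmetric e ->
  0 < size c -> ~~ odd (size c) -> CP e x0 c -> AP e x0 (psi x0 b c).
Proof.
move=> hsym c0 hev [ha hch h0 hk [hnb hw]].
split; rewrite ?size_psi //; first exact: all_psi.
- by exists b; rewrite psiK.
- move=> i hi; rewrite !nth_psi //; last by lia.
  by rewrite PW2 ?hnb // parS.
rewrite !nth_psi //; last by lia.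
rewrite PW2; last by rewrite (par_last b c0 hev).
apply: contra hw => /eqP ->; by rewrite inv_invK.
Qed.

Lemma Na_even (T : finType) (e : rel T) (x0 : T) k : symmetric e -> irreflexive e ->
  0 < k -> ~~ odd k -> Na e x0 k = 2 * N0 e x0 k.
Proof.
move=> hsym hirr k0 hev.
have szp : forall b (c : k.-tuple (T * T)), size (psi x0 b c) == k.
  by move=> b c; rewrite size_psi size_tuple.
pose F := fun bc : bool * k.-tuple (T * T) => Tuple (szp bc.1 bc.2).
pose D := setX [set: bool]
   [set c : k.-tuple (T * T) | is_cycle_at e x0 c && reduced_cycle c].
have hD : forall b (c : k.-tuple (T * T)), (b, c) \in D -> CP e x0 c.
  move=> b c; rewrite in_setX inE /= => h.
  have hc0 : 0 < size c by rewrite size_tuple.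
  by move: h => /and3P[_ h1 h2]; apply/(@cycP T e x0 c hc0); rewrite h1 h2.
rewrite /Na.
have -> : [set c : k.-tuple (T * T) | is_alt_cycle_at e x0 c && reduced_alt x0 c]
          = F @: D.
  apply/setP => a; rewrite inE; apply/idP/imsetP.
    move/(@altP T e x0 k a k0) => [ha hodd [b hb] hnr hw].
    have hsa : size a = k := size_tuple a.
    exists (b, Tuple (szp b a)).
      have hp0 : 0 < size (psi x0 b a) by rewrite size_psi hsa.
      rewrite in_setX in_setT inE /=; apply/(@cycP T e x0 _ hp0).
      by apply: (alt_to_cyc hsym _ hodd ha hb hnr hw); rewrite hsa.
    by apply: val_inj => /=; rewrite psiK.
  move=> [[b c] /hD hc ->]; apply/(@altP T e x0 k (F (b, c)) k0) => /=.
  by apply: cyc_to_alt; rewrite ?size_tuple.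
rewrite card_in_imset; first by rewrite cardsX cardsT card_bool.
move=> [b c] [b' c'] /hD hc /hD hc' /(congr1 val) /= heq.
have hc0 : 0 < size c by rewrite size_tuple.
case hb: (b == b').
  move/eqP: hb => hb; rewrite -hb in heq *; congr (_, _); apply: val_inj => /=.
  by rewrite -(psiK x0 b c) heq psiK.
exfalso.
have := congr1 (fun s => nth (x0, x0) s 0) heq => /=.
rewrite !nth_psi ?size_tuple //.
case: hc => ha _ h0 _ _; case: hc' => _ _ h0' _ _.
have harc := (all_nthP (x0, x0) ha) 0 hc0.
move: harc h0 h0'; case: (nth (x0, x0) c 0) => u v; case: (nth (x0, x0) c' 0) => u' v'.
rewrite /is_arc /= => harc hu hu'; subst u u'.
clear heq; case: b hb; case: b' => //= _ [h1 h2]; subst; by rewrite hirr in harc.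
Qed.

Lemma Na_odd (T : finType) (e : rel T) (x0 : T) k : odd k -> Na e x0 k = 0.
Proof.
move=> hk; rewrite /Na; apply/eqP; rewrite cards_eq0; apply/eqP/setP => c.
by rewrite !inE /is_alt_cycle_at hk /= andbF.
Qed.

Local Open Scope ring_scope.
Definition trunc (N : nat) (f : fps) : {poly rat} := \poly_(i < N) f i.

Lemma coef_trunc N f i : (i < N)%N -> (trunc N f)`_i = f i.
Proof. by move=> h; rewrite coef_poly h. Qed.

Lemma mul_agree N f g (p q : {poly rat}) :
  (forall i, (i < N)%N -> f i = p`_i) -> (forall i, (i < N)%N -> g i = q`_i) ->
  forall n, (n < N)%N -> fps_mul f g n = (p * q)`_n.
Proof.
move=> hf hg n hn; rewrite coefM /fps_mul; apply: eq_bigr => i _.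
have hi := ltn_ord i.
by rewrite hf ?hg //; lia.
Qed.

Lemma pow_agree N f (p : {poly rat}) :
  (forall i, (i < N)%N -> f i = p`_i) ->
  forall m n, (n < N)%N -> fps_pow f m n = (p ^+ m)`_n.
Proof.
move=> hf; elim=> [|m IH] n hn /=; first by rewrite expr0 coef1.
by rewrite exprS; exact: (mul_agree hf (fun i hi => IH i hi) hn).
Qed.

Lemma exp_agree N f (p : {poly rat}) :
  (forall i, (i < N)%N -> f i = p`_i) ->
  forall n, (n < N)%N -> fps_exp f n = \sum_(m < n.+1) (p ^+ m)`_n / (m`!)%:R.
Proof. by move=> hf n hn; apply: eq_bigr => m _; rewrite (pow_agree hf). Qed.

Lemma decX (p : {poly rat}) : p`_0 = 0 -> p = drop_poly 1 p * 'X.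
Proof.
move=> h0; rewrite -{1}(poly_take_drop 1 p).
have -> : take_poly 1 p = 0.
  by apply/polyP => i; rewrite coef_take_poly coef0; case: i => // ; rewrite h0.
by rewrite add0r expr1.
Qed.

Lemma val2 (p q : {poly rat}) j l n : p`_0 = 0 -> q`_0 = 0 -> (n < j + l)%N ->
  (p ^+ j * q ^+ l)`_n = 0.
Proof.
move=> hp hq hn; rewrite (decX hp) (decX hq) !exprMn.
have -> : (drop_poly 1 p ^+ j * 'X ^+ j * (drop_poly 1 q ^+ l * 'X ^+ l)) =
   (drop_poly 1 p ^+ j * drop_poly 1 q ^+ l) * 'X^(j + l).
  by rewrite exprD; ring.
by rewrite coefMXn hn.
Qed.

Lemma exch (F : nat -> nat -> rat) M :
  \sum_(m < M) \sum_(i < m.+1) F i (m - i)%N = \sum_(i < M) \sum_(l < M - i) F i l.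
Proof.
elim: M => [|M IH]; first by rewrite !big_ord0.
rewrite [LHS]big_ord_recr /= IH [RHS]big_ord_recr /= subSnn big_ord1.
have -> : \sum_(i < M) \sum_(l < M.+1 - i) F i l =
  \sum_(i < M) (\sum_(l < M - i) F i l + F i (M - i)%N).
  apply: eq_bigr => i _; rewrite subSn; last by have := ltn_ord i; lia.
  by rewrite big_ord_recr.
rewrite big_split /= -addrA; congr (_ + _); by rewrite big_ord_recr /= subnn.
Qed.

Lemma nat_fact_neq0 m : ((m`!)%:R : rat) != 0.
Proof. by rewrite pnatr_eq0 -lt0n fact_gt0. Qed.

Lemma exp_add (f g : fps) : f 0%N = 0 -> g 0%N = 0 ->
  fps_exp (fun n => f n + g n) = fps_mul (fps_exp f) (fps_exp g).
Proof.
move=> f0 g0; apply: functional_extensionality => n.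
pose N := n.+1; pose p := trunc N f; pose q := trunc N g.
have hp : p`_0 = 0 by rewrite coef_trunc.
have hq : q`_0 = 0 by rewrite coef_trunc.
have agf : forall i, (i < N)%N -> f i = p`_i by move=> i hi; rewrite coef_trunc.
have agg : forall i, (i < N)%N -> g i = q`_i by move=> i hi; rewrite coef_trunc.
have agfg : forall i, (i < N)%N -> f i + g i = (p + q)`_i.
  by move=> i hi; rewrite coefD !coef_trunc.
have ext : forall (r : {poly rat}) (h : fps), r`_0 = 0 ->
   (forall i, (i < N)%N -> h i = r`_i) ->
   forall i, (i < N)%N -> fps_exp h i = (\sum_(j < N) (j`!%:R^-1) *: r ^+ j)`_i.
  move=> r h hr agh i hi; rewrite (exp_agree agh hi) coef_sum.
  rewrite (big_ord_widen N (fun m : nat => (r ^+ m)`_i / m`!%:R) hi) big_mkcond /=.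
  apply: eq_bigr => j _; rewrite coefZ; case: ifP => hj; first by rewrite mulrC.
  have := @val2 r r j 0 i hr hr; rewrite expr0 mulr1 addn0 => ->; first by rewrite mulr0.
  lia.
rewrite (mul_agree (ext p f hp agf) (ext q g hq agg) (ltnSn n)).
rewrite (exp_agree agfg (ltnSn n)).
pose t j l := (p ^+ j * q ^+ l)`_n / ((j`!)%:R * (l`!)%:R).
transitivity (\sum_(m < N) \sum_(i < m.+1) t (m - i)%N i).
  apply: eq_bigr => m _; rewrite exprDn coef_sum mulr_suml; apply: eq_bigr => i _.
  rewrite coefMn /t -mulr_natr.
  have him : (i <= m)%N by have := ltn_ord i; lia.
  rewrite -{1}(bin_fact him) !natrM.
  have hC : (('C(m, i))%:R : rat) != 0 by rewrite pnatr_eq0 -lt0n bin_gt0.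
  have := nat_fact_neq0 i; have := nat_fact_neq0 (m - i)%N => h1 h2.
  by field; rewrite hC h1 h2.
rewrite (exch (fun i l => t l i)).
rewrite mulr_suml coef_sum.
transitivity (\sum_(j < N) \sum_(l < N) t j l).
  rewrite exchange_big /=; apply: eq_bigr => i _.
  rewrite (big_ord_widen N (fun l : nat => t l i) (leq_subr i N)) big_mkcond /=.
  apply: eq_bigr => l _; case: ifP => // hl.
  rewrite /t val2 ?mul0r //; have := ltn_ord i; lia.
apply: eq_bigr => j _; rewrite mulr_sumr coef_sum; apply: eq_bigr => l _.
rewrite -scalerAl -scalerAr !coefZ /t invfM; ring.
Qed.

Lemma exp_negt (f : fps) : fps_exp (fps_negt f) = fps_negt (fps_exp f).
Proof.
have hpow : forall m n, fps_pow (fps_negt f) m n = (-1) ^+ n * fps_pow f m n.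
  elim=> [|m IH] n /=.
    by rewrite /fps_one; case: n => [|n]; rewrite ?expr0 ?mul1r ?mulr0.
  rewrite /fps_mul mulr_sumr; apply: eq_bigr => i _; rewrite IH /fps_negt.
  have hi : (i <= n)%N by have := ltn_ord i; lia.
  have -> : ((-1) ^+ n : rat) = (-1) ^+ i * (-1) ^+ (n - i) by rewrite -exprD subnKC.
  ring.
apply: functional_extensionality => n; rewrite /fps_exp /fps_negt mulr_sumr.
by apply: eq_bigr => m _; rewrite hpow mulrA.
Qed.

Lemma logser_split (T : finType) (e : rel T) (x0 : T) : symmetric e -> irreflexive e ->
  logser (Na e x0) =
  (fun n => logser (N0 e x0) n + fps_negt (logser (N0 e x0)) n).
Proof.
move=> hsym hirr; apply: functional_extensionality => k.
rewrite /logser /fps_negt; case: k => [|k] /=; first by rewrite mulr0 addr0.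
case ho: (odd k.+1).
  rewrite Na_odd // -signr_odd ho expr1 mulN1r subrr mul0r //.
rewrite Na_even // ?ho //= -signr_odd ho expr0 mul1r natrM; ring.
Qed.

Theorem proposition3 (T : finType) (e : rel T)
  (e_sym : symmetric e) (e_irr : irreflexive e)
  (G_conn : connected_graph e) (G_vt : vertex_transitive e)
  (q : nat) (G_reg : regular e q.+1) (x0 : T) :
  alt_zeta e x0 = fps_mul (ihara_zeta e x0) (fps_negt (ihara_zeta e x0)).
Proof.
rewrite /alt_zeta /ihara_zeta (logser_split x0 e_sym e_irr) exp_add ?exp_negt //.
Qed.
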